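(* Let $G=(V,E)$ be a directed graph on $n$ vertices in which every vertex has at least one out-neighbor, accessible only through Jump and RandomCrawl queries, let $\alpha\in(0,1)$ be a fixed constant (the teleportation probability), and let $1\le \Delta\le n$. Then the running time (number of queries plus all computation) of the algorithm ApproximatePageRank described below, run on $G$ with threshold $\Delta$, is at most $\tilde{O}(n/\Delta)$, where $\tilde{O}$ hides factors polylogarithmic in $n$ and the dependence on $\alpha$ is ignored.
   Context: Query model: a Jump query takes no input and returns a vertex of $G$ chosen uniformly at random; a RandomCrawl query takes a vertex $v$ and returns an out-neighbor of $v$ chosen uniformly at random. All logarithms are base 2. Subroutine ApproxRow$(v,\epsilon,\rho)$ (with $0<\epsilon,\rho<1$): set $\ell=\log_{1/(1-\alpha)}(4/\epsilon)$ and $r=16\log(n)/(\epsilon\rho^2)$. Repeat $r$ times: run a walk starting at $v$ in which at each step, with probability $\alpha$ the walk makes a termination step (and stops), and with probability $1-\alpha$ it moves to RandomCrawl of its current vertex; the walk is artificially stopped after $\ell$ steps if it has not terminated. If the walk made a termination step while at vertex $u$, add 1 to a counter of $u$ (stored in a binary search tree keyed by vertex identity). Output every vertex with a nonzero counter together with its counter divided by $r$ (its estimated value). Algorithm ApproximatePageRank (input $\Delta$): maintain a binary search tree ChunkTree of counters keyed by pairs (vertex, scale). For $t=0,1,\dots,\log(4n/\Delta)$: set $\epsilon_t=2^{-t}$; repeat $4\,\epsilon_t (n/\Delta)\log^2(n)$ times: Jump to a random vertex $v$, call ApproxRow$(v,\epsilon_t/2,1/2)$, and for each vertex $j$ in the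 returned list (whose estimated value lies in the chunk of scale $\epsilon_t$, i.e. in $[\epsilon_t,2\epsilon_t)$) add 1 to the counter with key $(j,\epsilon_t)$, creating it with value 1 if absent. Second part: for every key $(j,\epsilon)$ in ChunkTree whose counter value is at least $\tfrac12\log n$, add $\frac{\Delta}{2\epsilon\log^2(n)}$ to an accumulator of $j$ (stored in a binary search tree keyed by vertex). Finally output every vertex whose accumulator is at least $\Delta/4$, together with its accumulated value. *)

(* Defs.v *)
From Stdlib Require Import Reals Lra Lia List Arith.
Import ListNotations.
Open Scope R_scope.

Definition lg (x : R) : R := ln x / ln 2.

Definition floorR (x : R) : nat := Z.to_nat (Int_part x).
Definition ceilR (x : R) : nat := Z.to_nat (- Int_part (- x)).

(** A randomized program interacting with the graph oracle. Vertices are the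
    naturals 0..n-1.
    - [Jump k]      : Jump query (cost 1), answer is a vertex.
    - [Crawl v k]   : RandomCrawl query at v (cost 1), answer an out-neighbor.
    - [Flip k]      : a random coin (cost 1); [true] = termination step
                      (taken with probability alpha).
    - [Tick c k]    : c units of internal computation. *)
Inductive Comp (A : Type) : Type :=
| Ret (a : A)
| Jump (k : nat -> Comp A)
| Crawl (v : nat) (k : nat -> Comp A)
| Flip (k : bool -> Comp A)
| Tick (c : nat) (k : Comp A).
Arguments Ret {A} a.
Arguments Jump {A} k.
Arguments Crawl {A} v k.
Arguments Flip {A} k.
Arguments Tick {A} c k.

Fixpoint bind {A B} (m : Comp A) (f : A -> Comp B) : Comp B :=
  match m with
  | Ret a => f a
  | Jump k => Jump (fun v => bind (k v) f)
  | Crawl v k => Crawl v (fun u => bind (k u) f)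
  | Flip k => Flip (fun b => bind (k b) f)
  | Tick c k => Tick c (bind k f)
  end.

(** Every possible outcome
    of the random choices is allowed, so bounding all executions is a
    worst-case running-time bound. *)
Inductive exec (n : nat) (adj : nat -> nat -> Prop) {A : Type}
  : Comp A -> nat -> A -> Prop :=
| ex_ret a : exec n adj (Ret a) 0 a
| ex_jump k v c a : (v < n)%nat -> exec n adj (k v) c a ->
    exec n adj (Jump k) (S c) a
| ex_crawl v k u c a : adj v u -> exec n adj (k u) c a ->
    exec n adj (Crawl v k) (S c) a
| ex_flip k b c a : exec n adj (k b) c a -> exec n adj (Flip k) (S c) a
| ex_tick m k c a : exec n adj k c a -> exec n adj (Tick m k) (m + c) a.

Fixpoint repeatM {S} (m : nat) (body : S -> Comp S) (s : S) : Comp S :=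
  match m with
  | O => Ret s
  | S m' => Tick 1 (bind (body s) (repeatM m' body))
  end.

Fixpoint forList {S X} (l : list X) (body : X -> S -> Comp S) (s : S)
  : Comp S :=
  match l with
  | [] => Ret s
  | x :: l' => Tick 1 (bind (body x s) (forList l' body))
  end.

(** * Binary search trees, modelled as association lists; each
    lookup/insert/update on a tree with m keys costs log2 m + 1
    (balanced BST). *)
Definition bst_cost (m : nat) : nat := (Nat.log2 m + 1)%nat.

Fixpoint upd {K V} (eqK : K -> K -> bool) (k : K) (f : option V -> V)
  (l : list (K * V)) : list (K * V) :=
  match l with
  | [] => [(k, f None)]
  | (k', v) :: l' => if eqK k k' then (k', f (Some v)) :: l'
                     else (k', v) :: upd eqK k f l'
  end.

Definition bst_update {K V} (eqK : K -> K -> bool) (k : K) (f : option V -> V)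
  (l : list (K * V)) : Comp (list (K * V)) :=
  Tick (bst_cost (length l)) (Ret (upd eqK k f l)).

Definition incr (o : option nat) : nat :=
  match o with None => 1%nat | Some c => S c end.

Definition addv (x : R) (o : option R) : R :=
  match o with None => x | Some y => y + x end.

Definition pair_eqb (a b : nat * nat) : bool :=
  Nat.eqb (fst a) (fst b) && Nat.eqb (snd a) (snd b).

Fixpoint walk (l : nat) (u : nat) : Comp (option nat) :=
  match l with
  | O => Ret None
  | S l' => Flip (fun b => if b then Ret (Some u)
                           else Crawl u (fun w => walk l' w))
  end.

Definition approx_row (alpha : R) (n : nat) (v : nat) (eps rho : R)
  : Comp (list (nat * R)) :=
  let l := ceilR (ln (4 / eps) / ln (1 / (1 - alpha))) in
  let r := ceilR (16 * lg (INR n) / (eps * rho ^ 2)) in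
  bind (repeatM r (fun cnt =>
          bind (walk l v) (fun res =>
            match res with
            | None => Ret cnt
            | Some u => bst_update Nat.eqb u incr cnt
            end)) [])
       (fun cnt =>
          Tick (length cnt)
            (Ret (map (fun p => (fst p, INR (snd p) / INR r)) cnt))).

Definition eps_t (t : nat) : R := (/ 2) ^ t.

Definition first_part (alpha : R) (n : nat) (Delta : R)
  : Comp (list ((nat * nat) * nat)) :=
  let T := floorR (lg (4 * INR n / Delta)) in
  forList (seq 0 (S T)) (fun t chunk =>
    let e := eps_t t in
    let reps := ceilR (4 * e * (INR n / Delta) * (lg (INR n)) ^ 2) in
    repeatM reps (fun chunk =>
      Jump (fun v =>
        bind (approx_row alpha n v (e / 2) (1 / 2)) (fun L =>
          forList L (fun jv chunk =>
            if Rle_dec e (snd jv) then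
              if Rlt_dec (snd jv) (2 * e) then
                bst_update pair_eqb (fst jv, t) incr chunk
              else Ret chunk
            else Ret chunk) chunk))) chunk) [].

Definition approximate_pagerank (alpha : R) (n : nat) (Delta : R)
  : Comp (list (nat * R)) :=
  bind (first_part alpha n Delta) (fun chunk =>
  bind (forList chunk (fun kc acc =>
          let '((j, t), c) := kc in
          if Rle_dec (lg (INR n) / 2) (INR c) then
            bst_update Nat.eqb j
              (addv (Delta / (2 * eps_t t * (lg (INR n)) ^ 2))) acc
          else Ret acc) []) (fun acc =>
  forList acc (fun ja out =>
    if Rle_dec (Delta / 4) (snd ja) then Ret (ja :: out) else Ret out) [])).

(* Main.v *)
Require Import Defs.
From Stdlib Require Import Reals Lra Lia List Arith ZArith.
Import ListNotations.
Open Scope R_scope.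

Section E.
Variable n : nat.
Variable adj : nat -> nat -> Prop.

Lemma exec_bind {A B} (m : Comp A) (f : A -> Comp B) c b :
  exec n adj (bind m f) c b ->
  exists c1 a c2, exec n adj m c1 a /\ exec n adj (f a) c2 b /\ c = (c1 + c2)%nat.
Proof.
  revert c b; induction m as [a|k IH|v k IH|k IH|m k IH]; simpl; intros c b H.
  - exists 0%nat, a, c; repeat split; auto; constructor.
  - inversion H; subst. match goal with Hx : exec _ _ (bind _ _) _ _ |- _ => edestruct (IH _ _ _ Hx) as (c1&a&c2&G1&G2&->) end.
    exists (S c1), a, c2; split; [econstructor; eauto|split; [auto|lia]].
  - inversion H; subst. match goal with Hx : exec _ _ (bind _ _) _ _ |- _ => edestruct (IH _ _ _ Hx) as (c1&a&c2&G1&G2&->) end.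
    exists (S c1), a, c2; split; [econstructor; eauto|split; [auto|lia]].
  - inversion H; subst. match goal with Hx : exec _ _ (bind _ _) _ _ |- _ => edestruct (IH _ _ _ Hx) as (c1&a&c2&G1&G2&->) end.
    exists (S c1), a, c2; split; [econstructor; eauto|split; [auto|lia]].
  - inversion H; subst. match goal with Hx : exec _ _ (bind _ _) _ _ |- _ => edestruct (IH _ _ Hx) as (c1&a&c2&G1&G2&->) end.
    exists (m + c1)%nat, a, c2; split; [constructor; auto|split; [auto|lia]].
Qed.

Lemma exec_ret {A} (a : A) c b : exec n adj (Ret a) c b -> c = 0%nat /\ b = a.
Proof. intros H; inversion H; subst; auto. Qed.

Lemma exec_tick {A} m (k : Comp A) c b : exec n adj (Tick m k) c b ->
  exists c', exec n adj k c' b /\ c = (m + c')%nat.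
Proof. intros H; inversion H; subst; eauto. Qed.

Lemma walk_cost l u c a : exec n adj (walk l u) c a -> (c <= 2 * l)%nat.
Proof.
  revert u c a; induction l; simpl; intros u c a H.
  - apply exec_ret in H; lia.
  - inversion H as [| | |k0 b c0 a0 Hb|]; subst. destruct b.
    + apply exec_ret in Hb; lia.
    + inversion Hb as [|? ? ? ? ? Hw|? ? ? ? ? ? Hw| |]; subst. apply IHl in Hw. lia.
Qed.

Lemma upd_len {K V} eqK k (f : option V -> V) (l : list (K * V)) :
  (length (upd eqK k f l) <= S (length l))%nat.
Proof.
  induction l as [|[k' v] l IH]; simpl; [lia|]. destruct (eqK k k'); simpl; lia.
Qed.

Lemma bst_update_spec {K V} eqK k (f : option V -> V) (l : list (K * V)) c l' :
  exec n adj (bst_update eqK k f l) c l' ->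
  c = bst_cost (length l) /\ (length l' <= S (length l))%nat.
Proof.
  unfold bst_update; intros H. apply exec_tick in H as (c'&H&->).
  apply exec_ret in H as [-> ->]. split; [lia|apply upd_len].
Qed.

Lemma bst_cost_mono a b : (a <= b)%nat -> (bst_cost a <= bst_cost b)%nat.
Proof. unfold bst_cost; intros; pose proof (Nat.log2_le_mono a b H); lia. Qed.

Lemma repeatM_bound {S} (f : S -> nat) (body : S -> Comp S) K d B :
  (forall s c s', (f s + d <= K)%nat -> exec n adj (body s) c s' ->
     (c <= B)%nat /\ (f s' <= f s + d)%nat) ->
  forall r s c s', (f s + r * d <= K)%nat -> exec n adj (repeatM r body s) c s' ->
     (c <= r * (1 + B))%nat /\ (f s' <= f s + r * d)%nat.
Proof.
  intros HB r; induction r; simpl; intros s c s' Hk H.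
  - apply exec_ret in H as [-> ->]; lia.
  - apply exec_tick in H as (c'&H&->). apply exec_bind in H as (c1&s1&c2&H1&H2&->).
    destruct (HB s c1 s1) as [Hc1 Hf1]; [lia|exact H1|].
    destruct (IHr s1 c2 s') as [? ?]; [nia|exact H2|]. nia.
Qed.

Lemma forList_bound {S X} (f : S -> nat) (body : X -> S -> Comp S) K d B :
  forall l, (forall x s c s', In x l -> (f s + d <= K)%nat -> exec n adj (body x s) c s' ->
     (c <= B)%nat /\ (f s' <= f s + d)%nat) ->
  forall s c s', (f s + length l * d <= K)%nat -> exec n adj (forList l body s) c s' ->
     (c <= length l * (1 + B))%nat /\ (f s' <= f s + length l * d)%nat.
Proof.
  intros l; induction l as [|x l IHl]; simpl; intros HB s c s' Hk H.
  - apply exec_ret in H as [-> ->]; lia.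
  - apply exec_tick in H as (c'&H&->). apply exec_bind in H as (c1&s1&c2&H1&H2&->).
    destruct (HB x s c1 s1) as [Hc1 Hf1]; [left; auto|lia|exact H1|].
    destruct (IHl ltac:(intros; eapply HB; eauto) s1 c2 s') as [? ?]; [nia|exact H2|]. nia.
Qed.

End E.

Section E2.
Variable n : nat.
Variable adj : nat -> nat -> Prop.

Lemma approx_row_cost alpha v eps rho RR l r c L :
  l = ceilR (ln (4 / eps) / ln (1 / (1 - alpha))) ->
  r = ceilR (16 * lg (INR n) / (eps * rho ^ 2)) ->
  (r <= RR)%nat -> exec n adj (approx_row alpha n v eps rho) c L ->
  (c <= r * (2 + 2 * l + bst_cost RR))%nat /\ (length L <= r)%nat.
Proof.
  intros El Er Hr H. unfold approx_row in H; cbv zeta in H. rewrite <- El, <- Er in H.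
  apply exec_bind in H as (c1&cnt&c2&H1&H2&->).
  apply exec_tick in H2 as (c'&H2&->). apply exec_ret in H2 as [-> ->].
  rewrite length_map.
  eapply (repeatM_bound n adj (@length (nat*nat)) _ RR 1 (2 * l + bst_cost RR)) in H1 as [Hc Hl].
  { simpl in Hl. nia. }
  - intros s c s' Hs Hx. apply exec_bind in Hx as (d1&res&d2&G1&G2&->).
    apply walk_cost in G1. destruct res as [u|].
    + apply bst_update_spec in G2 as [-> ?]. pose proof (bst_cost_mono (length s) RR ltac:(lia)). lia.
    + apply exec_ret in G2 as [-> ->]. lia.
  - simpl; lia.
Qed.

End E2.

Definition mx (f : nat -> nat) (T : nat) : nat :=
  fold_right Nat.max 0%nat (map f (seq 0 (S T))).

Lemma mx_ge f T t : (t <= T)%nat -> (f t <= mx f T)%nat.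
Proof.
  intros Ht. unfold mx. assert (Hin : In t (seq 0 (S T))) by (apply in_seq; lia).
  generalize (seq 0 (S T)) Hin. intros l; induction l as [|x l IH]; simpl; [tauto|].
  intros [->|H]; [lia|]. specialize (IH H). lia.
Qed.

Definition repsf (n : nat) (Delta : R) (t : nat) : nat :=
  ceilR (4 * eps_t t * (INR n / Delta) * lg (INR n) ^ 2).
Definition rrf (n : nat) (t : nat) : nat :=
  ceilR (16 * lg (INR n) / (eps_t t / 2 * (1 / 2) ^ 2)).
Definition llf (alpha : R) (t : nat) : nat :=
  ceilR (ln (4 / (eps_t t / 2)) / ln (1 / (1 - alpha))).
Definition TT (n : nat) (Delta : R) : nat := floorR (lg (4 * INR n / Delta)).

Section E3.
Variable n : nat.
Variable adj : nat -> nat -> Prop.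
Variable alpha Delta : R.

Let T := TT n Delta.
Let RR := mx (rrf n) T.
Let LL := mx (llf alpha) T.
Let REPS := mx (repsf n Delta) T.
Let PR := mx (fun t => (repsf n Delta t * rrf n t)%nat) T.
Let KK := (S T * PR)%nat.
Let Z := (3 + 2 * LL + bst_cost RR + bst_cost KK)%nat.

Lemma first_part_cost c chunk :
  exec n adj (first_part alpha n Delta) c chunk ->
  (c <= S T * (1 + (2 * REPS + PR * Z)))%nat /\ (length chunk <= KK)%nat.
Proof.
  unfold first_part; cbv zeta; intros H.
  eapply (forList_bound n adj (@length ((nat*nat)*nat)) _ KK PR (2 * REPS + PR * Z)) in H as [Hc Hl].
  - rewrite length_seq in Hc, Hl. simpl in Hl. unfold KK, T, TT. split; [exact Hc|simpl; lia].
  - intros t s c' s' Hin Hs Hx. apply in_seq in Hin. assert (HtT : (t <= T)%nat) by (unfold T, TT; lia).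
    assert (Hrt : (rrf n t <= RR)%nat) by (apply mx_ge; lia).
    assert (Hlt : (llf alpha t <= LL)%nat) by (apply mx_ge; lia).
    assert (Hpt : (repsf n Delta t * rrf n t <= PR)%nat)
      by (apply (mx_ge (fun t => (repsf n Delta t * rrf n t)%nat)); lia).
    assert (Hpr : (repsf n Delta t <= REPS)%nat) by (apply mx_ge; lia).
    eapply (repeatM_bound n adj (@length ((nat*nat)*nat)) _ KK (rrf n t) (1 + rrf n t * Z))
      with (r := repsf n Delta t) in Hx as [Hc Hl].
    + split; [|nia].
      assert ((repsf n Delta t * rrf n t) * Z <= PR * Z)%nat by (apply Nat.mul_le_mono_r; exact Hpt). nia.
    + intros s0 c0 s0' Hs0 Hy.
      inversion Hy as [|k v cc a Hv Hy'| | |]; subst.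
      apply exec_bind in Hy' as (d1&L&d2&G1&G2&->).
      eapply approx_row_cost with (RR := RR) (l := llf alpha t) (r := rrf n t) in G1 as [Ga Gl];
        [| reflexivity | reflexivity | exact Hrt ].
      eapply (forList_bound n adj (@length ((nat*nat)*nat)) _ KK 1 (bst_cost KK)) in G2 as [Gc Gl2].
      * split; [|lia].
        assert (bst_cost RR <= Z /\ 2 * llf alpha t <= Z /\ bst_cost KK + 3 <= Z)%nat by (unfold Z; lia).
        nia.
      * intros [j x] s1 c1 s1' _ Hs1 Hz; simpl in Hz.
        destruct (Rle_dec (eps_t t) x); [destruct (Rlt_dec x (2 * eps_t t))|].
        -- apply bst_update_spec in Hz as [-> ?]. split; [apply bst_cost_mono; lia|lia].
        -- apply exec_ret in Hz as [-> ->]; lia.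
        -- apply exec_ret in Hz as [-> ->]; lia.
      * lia.
    + nia.
  - simpl. rewrite length_seq. unfold KK, T, TT. simpl; lia.
Qed.

Lemma total_cost c out :
  exec n adj (approximate_pagerank alpha n Delta) c out ->
  (c <= S T * (1 + (2 * REPS + PR * Z)) + KK * (1 + bst_cost KK) + KK)%nat.
Proof.
  unfold approximate_pagerank; intros H.
  apply exec_bind in H as (c1&chunk&c2&H1&H2&->).
  apply first_part_cost in H1 as [Hc1 Hl1].
  apply exec_bind in H2 as (c4&acc&c3&H2&H3&->).
  eapply (forList_bound n adj (@length (nat*R)) _ KK 1 (bst_cost KK)) in H2 as [Hc2 Hl2].
  - eapply (forList_bound n adj (fun _ : list (nat*R) => 0%nat) _ 0 0 0) in H3 as [Hc3 _].
    + simpl in Hl2. nia.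
    + intros [j a] s c s' _ _ Hz; simpl in Hz.
      destruct (Rle_dec (Delta / 4) a); apply exec_ret in Hz as [-> ->]; lia.
    + lia.
  - intros [[j t] cc] s c s' _ Hs Hz; simpl in Hz.
    destruct (Rle_dec (lg (INR n) / 2) (INR cc)).
    + apply bst_update_spec in Hz as [-> ?]. split; [apply bst_cost_mono; lia|lia].
    + apply exec_ret in Hz as [-> ->]; lia.
  - simpl. lia.
Qed.

End E3.

Lemma INR_to_nat z : INR (Z.to_nat z) = Rmax 0 (IZR z).
Proof.
  destruct (Z_le_gt_dec 0 z).
  - rewrite INR_IZR_INZ, Z2Nat.id by lia. rewrite Rmax_right; auto. apply IZR_le; lia.
  - replace (Z.to_nat z) with 0%nat by lia. rewrite Rmax_left; auto.
    simpl. apply IZR_le; lia.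
Qed.

Lemma ceilR_le x : 0 <= x -> INR (ceilR x) <= x + 1.
Proof.
  intros Hx. unfold ceilR. rewrite INR_to_nat, opp_IZR.
  destruct (base_Int_part (- x)). apply Rmax_lub; lra.
Qed.

Lemma floorR_le x : 0 <= x -> INR (floorR x) <= x.
Proof.
  intros Hx. unfold floorR. rewrite INR_to_nat.
  destruct (base_Int_part x). apply Rmax_lub; lra.
Qed.

Lemma mx_le_real f T b : (forall t, (t <= T)%nat -> INR (f t) <= b) -> 0 <= b ->
  INR (mx f T) <= b.
Proof.
  intros H Hb. unfold mx.
  assert (H' : forall t, In t (seq 0 (S T)) -> INR (f t) <= b)
    by (intros t Ht; apply in_seq in Ht; apply H; lia).
  revert H'. generalize (seq 0 (S T)). intros l; induction l as [|x l IH]; simpl; intros H'.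
  - lra.
  - destruct (Nat.max_spec (f x) (fold_right Nat.max 0%nat (map f l))) as [[_ E]|[_ E]]; rewrite E.
    + apply IH; auto.
    + apply H'; auto.
Qed.

Lemma ln_le' x y : 0 < x -> x <= y -> ln x <= ln y.
Proof. intros Hx Hxy. destruct (Rle_lt_or_eq_dec _ _ Hxy) as [h | ->]; [left; apply ln_increasing; auto|lra]. Qed.

Lemma ln2_pos : 0 < ln 2.
Proof. pose proof ln_lt_2; lra. Qed.

Lemma lg_bound X a b y : 0 < X -> 0 < y -> X <= 2 ^ a * y ^ b -> lg X <= INR a + INR b * lg y.
Proof.
  intros HX Hy H. unfold lg. pose proof ln2_pos.
  assert (ln X <= INR a * ln 2 + INR b * ln y).
  { rewrite <- !ln_pow by lra. rewrite <- ln_mult by (apply pow_lt; lra).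
    apply ln_le'; auto. }
  apply (Rmult_le_reg_r (ln 2)); auto. unfold Rdiv. rewrite Rmult_assoc, Rinv_l by lra. replace ((INR a + INR b * (ln y * / ln 2)) * ln 2) with (INR a * ln 2 + INR b * ln y) by (field; lra). lra.
Qed.

Lemma log2_le_lg m X : INR m <= X -> 1 <= X -> INR (Nat.log2 m) <= lg X.
Proof.
  intros H HX. unfold lg. pose proof ln2_pos.
  destruct m as [|m].
  - simpl. unfold Rdiv. apply Rmult_le_pos; [|left; apply Rinv_0_lt_compat; auto].
    rewrite <- ln_1. apply ln_le'; lra.
  - destruct (Nat.log2_spec (S m)) as [H1 _]; [lia|].
    apply le_INR in H1. rewrite pow_INR in H1. simpl INR in H1 at 1.
    assert (ln (2 ^ Nat.log2 (S m)) <= ln X).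
    { apply ln_le'; [apply pow_lt; lra|]. replace (1+1) with 2 in H1 by lra. lra. }
    rewrite ln_pow in H2 by lra.
    apply (Rmult_le_reg_r (ln 2)); auto. field_simplify; lra.
Qed.

Lemma final_arith T' R' P' Z' K' B' L N A :
  1 <= L -> 1 <= N -> 0 <= A ->
  0 <= T' <= L + 2 -> 0 <= R' <= 5 * N * L ^ 2 -> 0 <= P' <= 1029 * N * L ^ 3 ->
  0 <= Z' <= (40 + 2 * A) * L -> 0 <= K' <= 4116 * N * L ^ 4 -> 0 <= B' <= 23 * L ->
  (T' + 1) * (1 + (2 * R' + P' * Z')) + K' * (1 + B') + K'
  <= (4 * (11 + 1029 * (40 + 2 * A)) + 4116 * 24 + 4116) * N * L ^ 5.
Proof.
  intros HL HN HA [hT1 hT2] [hR1 hR2] [hP1 hP2] [hZ1 hZ2] [hK1 hK2] [hB1 hB2].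
  set (M := 40 + 2 * A).
  assert (HL2 : 1 <= L ^ 2) by nra.
  assert (HL3 : 1 <= L ^ 3) by (simpl; nra).
  assert (HL4 : 1 <= L ^ 4) by (simpl; nra).
  assert (HPZ : P' * Z' <= (1029 * N * L ^ 3) * (M * L)) by (apply Rmult_le_compat; auto).
  assert (E1 : 1 + (2 * R' + P' * Z') <= (11 + 1029 * M) * N * L ^ 4).
  { assert (N * L ^ 2 <= N * L ^ 4) by (apply Rmult_le_compat_l; [lra|]; simpl; nra).
    assert (1 <= N * L ^ 4) by nra.
    replace ((1029 * N * L ^ 3) * (M * L)) with (1029 * M * (N * L ^ 4)) in HPZ by (simpl; ring).
    nra. }
  assert (E2 : (T' + 1) * (1 + (2 * R' + P' * Z')) <= (4 * L) * ((11 + 1029 * M) * N * L ^ 4)).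
  { assert (0 <= P' * Z') by (apply Rmult_le_pos; lra). apply Rmult_le_compat; lra. }
  assert (E3 : K' * (1 + B') <= (4116 * N * L ^ 4) * (24 * L)) by (apply Rmult_le_compat; lra).
  assert (E4 : K' <= 4116 * N * L ^ 5).
  { assert (N * L ^ 4 <= N * L ^ 5) by (apply Rmult_le_compat_l; [lra|]; simpl; nra). nra. }
  replace ((4 * L) * ((11 + 1029 * M) * N * L ^ 4)) with (4 * (11 + 1029 * M) * N * L ^ 5) in E2 by (simpl; ring).
  replace ((4116 * N * L ^ 4) * (24 * L)) with (4116 * 24 * N * L ^ 5) in E3 by (simpl; ring).
  unfold M in *. lra.
Qed.

Lemma ln_le_inv a b : 0 < a -> 0 < b -> ln a <= ln b -> a <= b.
Proof. intros Ha Hb H. destruct (Rle_lt_dec a b); auto. pose proof (ln_increasing b a Hb r). lra. Qed.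

Theorem theorem1 :
  exists k : nat, forall alpha : R, 0 < alpha < 1 ->
  exists C : R, forall (n : nat) (adj : nat -> nat -> Prop) (Delta : R),
    (2 <= n)%nat ->
    (forall v u, adj v u -> (v < n)%nat /\ (u < n)%nat) ->
    (forall v, (v < n)%nat -> exists u, adj v u) ->
    1 <= Delta <= INR n ->
    forall (c : nat) (out : list (nat * R)),
      exec n adj (approximate_pagerank alpha n Delta) c out ->
      INR c <= C * (INR n / Delta) * (lg (INR n)) ^ k.
Proof.
  exists 5%nat. intros alpha Ha.
  set (la := ln (1 / (1 - alpha))).
  assert (Hla : 0 < la).
  { unfold la. rewrite <- ln_1. apply ln_increasing; [lra|].
    apply (Rmult_lt_reg_r (1 - alpha)); [lra|]. field_simplify; lra. }
  set (A := 6 * ln 2 / la + 1).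
  assert (HA : 0 <= A) by (unfold A; pose proof ln2_pos; assert (0 < 6 * ln 2 / la) by (apply Rdiv_lt_0_compat; lra); lra).
  exists (4 * (11 + 1029 * (40 + 2 * A)) + 4116 * 24 + 4116).
  intros n adj Delta Hn _ _ HD c out Hx.
  apply total_cost in Hx.
  set (T := TT n Delta) in Hx.
  set (PR := mx (fun t => (repsf n Delta t * rrf n t)%nat) T) in Hx.
  set (KK := (S T * PR)%nat) in Hx.
  set (RR := mx (rrf n) T) in Hx. set (LL := mx (llf alpha) T) in Hx.
  set (REPS := mx (repsf n Delta) T) in Hx.
  set (BR := bst_cost RR) in Hx. set (BK := bst_cost KK) in Hx.
  set (Z := (3 + 2 * LL + BR + BK)%nat) in Hx.
  apply le_INR in Hx. rewrite !plus_INR, !mult_INR in Hx.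
  replace (INR (S T)) with (INR T + 1) in Hx by (rewrite S_INR; ring).
  replace (INR 2) with 2 in Hx by (simpl; lra). replace (INR 1) with 1 in Hx by (simpl; lra).
  eapply Rle_trans; [exact Hx|]. clear Hx.
  set (N := INR n / Delta). set (L := lg (INR n)).
  replace (INR (1 + (2 * REPS + PR * Z))) with (1 + (2 * INR REPS + INR PR * INR Z))
    by (rewrite !plus_INR, !mult_INR; simpl; ring).
  replace (INR (1 + BK)) with (1 + INR BK) by (rewrite plus_INR; simpl; ring).
  pose proof ln2_pos as Hl2. pose proof ln_lt_2 as Hl2'.
  assert (hn : 2 <= INR n) by (apply le_INR in Hn; simpl in Hn; lra).
  assert (HLd : L * ln 2 = ln (INR n)) by (unfold L, lg; field; lra).
  assert (Hlnn : ln 2 <= ln (INR n)) by (apply ln_le'; lra).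
  assert (HL1 : 1 <= L) by nra.
  assert (Hlnn2 : ln (INR n) <= INR n - 1).
  { pose proof (exp_ineq1_le (ln (INR n))). rewrite exp_ln in H by lra. lra. }
  assert (HL2 : L <= 2 * INR n) by nra.
  assert (HNd : N * Delta = INR n) by (unfold N; field; lra).
  assert (HN1 : 1 <= N) by nra.
  assert (HNn : N <= INR n) by nra.
  assert (HX4 : 4 * INR n / Delta = 4 * N) by (unfold N; field; lra).
  assert (HT1 : INR T <= lg (4 * INR n / Delta)).
  { unfold T, TT. apply floorR_le. rewrite HX4. unfold lg, Rdiv. apply Rmult_le_pos; [|left; apply Rinv_0_lt_compat; lra].
    rewrite <- ln_1. apply ln_le'; lra. }
  assert (HT2 : lg (4 * INR n / Delta) <= 2 + L).
  { rewrite HX4. pose proof (lg_bound (4 * N) 2 1 (INR n)) as HH.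
    simpl INR in HH. unfold L. replace (1 + 1) with 2 in HH by lra.
    assert (4 * N <= 2 ^ 2 * INR n ^ 1) by (simpl; lra). specialize (HH ltac:(lra) ltac:(lra) H). lra. }
  assert (HT3 : 2 ^ T <= 4 * N).
  { apply ln_le_inv; [apply pow_lt; lra|lra|]. rewrite ln_pow by lra.
    rewrite HX4 in HT1. unfold lg in HT1.
    apply (Rmult_le_compat_r (ln 2)) in HT1; [|lra]. unfold Rdiv in HT1.
    rewrite Rmult_assoc, Rinv_l in HT1 by lra. lra. }
  assert (Hp : forall t, (t <= T)%nat -> 1 <= 2 ^ t <= 4 * N).
  { intros t Ht. split.
    - replace 1 with (2 ^ 0) by (simpl; lra). apply Rle_pow; [lra|lia].
    - eapply Rle_trans; [|exact HT3]. apply Rle_pow; [lra|lia]. }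
  assert (Heps : forall t, eps_t t = / 2 ^ t) by (intros; unfold eps_t; rewrite pow_inv; auto).
  assert (HNL2 : 1 <= N * L ^ 2) by (simpl; nra).
  assert (HNL3 : 1 <= N * L ^ 3) by (simpl; nra).
  assert (Hreps0 : forall t, (t <= T)%nat -> INR (repsf n Delta t) <= 4 * / 2 ^ t * N * L ^ 2 + 1).
  { intros t Ht. destruct (Hp t Ht) as [hp1 hp2]. unfold repsf. rewrite Heps.
    change (INR n / Delta) with N. change (lg (INR n)) with L.
    apply ceilR_le. assert (0 < / 2 ^ t) by (apply Rinv_0_lt_compat; lra).
    assert (0 <= L ^ 2) by (apply pow_le; lra). apply Rmult_le_pos; [|lra].
    apply Rmult_le_pos; lra. }
  assert (Hreps : forall t, (t <= T)%nat -> INR (repsf n Delta t) <= 5 * N * L ^ 2).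
  { intros t Ht. destruct (Hp t Ht) as [hp1 hp2]. specialize (Hreps0 t Ht).
    assert (/ 2 ^ t <= 1).
    { replace 1 with (/ 1) by lra. apply Rinv_le_contravar; lra. }
    assert (0 <= N * L ^ 2) by lra.
    assert (4 * / 2 ^ t * N * L ^ 2 <= 4 * (N * L ^ 2)).
    { replace (4 * / 2 ^ t * N * L ^ 2) with (4 * (/ 2 ^ t * (N * L ^ 2))) by ring.
      apply Rmult_le_compat_l; [lra|]. nra. }
    lra. }
  assert (Hrr0 : forall t, (t <= T)%nat -> INR (rrf n t) <= 128 * L * 2 ^ t + 1).
  { intros t Ht. destruct (Hp t Ht) as [hp1 hp2]. unfold rrf. rewrite Heps.
    change (lg (INR n)) with L.
    replace (16 * L / (/ 2 ^ t / 2 * (1 / 2) ^ 2)) with (128 * L * 2 ^ t) by (field; lra).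
    apply ceilR_le. nra. }
  assert (Hrr : forall t, (t <= T)%nat -> INR (rrf n t) <= 513 * N * L).
  { intros t Ht. destruct (Hp t Ht) as [hp1 hp2]. specialize (Hrr0 t Ht). nra. }
  assert (Hprod : forall t, (t <= T)%nat -> INR (repsf n Delta t * rrf n t) <= 1029 * N * L ^ 3).
  { intros t Ht. destruct (Hp t Ht) as [hp1 hp2]. rewrite mult_INR.
    assert (H1 : INR (repsf n Delta t) * INR (rrf n t) <= (4 * / 2 ^ t * N * L ^ 2 + 1) * (128 * L * 2 ^ t + 1)).
    { apply Rmult_le_compat; auto using pos_INR. }
    assert (Hq : / 2 ^ t * 2 ^ t = 1) by (field; lra).
    assert (Hq1 : / 2 ^ t <= 1).
    { replace 1 with (/ 1) by lra. apply Rinv_le_contravar; lra. }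
    assert (Hq0 : 0 < / 2 ^ t) by (apply Rinv_0_lt_compat; lra).
    replace ((4 * / 2 ^ t * N * L ^ 2 + 1) * (128 * L * 2 ^ t + 1)) with
      (512 * (N * L ^ 3) * (/ 2 ^ t * 2 ^ t) + 4 * (/ 2 ^ t) * (N * L ^ 2) + 128 * L * 2 ^ t + 1) in H1 by (simpl; ring).
    rewrite Hq in H1.
    assert (/ 2 ^ t * (N * L ^ 2) <= N * L ^ 3).
    { assert (N * L ^ 2 <= N * L ^ 3) by (simpl; nra). nra. }
    assert (L * 2 ^ t <= 4 * (N * L ^ 3)).
    { assert (L * 2 ^ t <= L * (4 * N)) by (apply Rmult_le_compat_l; lra).
      assert (N * L <= N * L ^ 3) by (simpl; nra). nra. }
    nra. }
  assert (Hll : forall t, (t <= T)%nat -> INR (llf alpha t) <= A * L).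
  { intros t Ht. destruct (Hp t Ht) as [hp1 hp2]. unfold llf. rewrite Heps.
    fold la.
    replace (4 / (/ 2 ^ t / 2)) with (8 * 2 ^ t) by (field; lra).
    pose proof (lg_bound (8 * 2 ^ t) 5 1 (INR n)) as HH.
    assert (8 * 2 ^ t <= 2 ^ 5 * INR n ^ 1) by (simpl; lra).
    specialize (HH ltac:(lra) ltac:(lra) H). simpl INR in HH.
    change (lg (INR n)) with L in HH.
    assert (Hln : ln (8 * 2 ^ t) <= (5 + L) * ln 2).
    { unfold lg in HH. apply (Rmult_le_compat_r (ln 2)) in HH; [|lra].
      unfold Rdiv in HH. rewrite Rmult_assoc, Rinv_l in HH by lra. lra. }
    assert (Hln0 : 0 <= ln (8 * 2 ^ t)) by (rewrite <- ln_1; apply ln_le'; lra).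
    eapply Rle_trans; [apply ceilR_le; unfold Rdiv; apply Rmult_le_pos; [lra|left; apply Rinv_0_lt_compat; lra]|].
    assert (ln (8 * 2 ^ t) / la <= (5 + L) * ln 2 / la).
    { unfold Rdiv. apply Rmult_le_compat_r; [left; apply Rinv_0_lt_compat; lra|lra]. }
    assert (0 <= ln 2 / la) by (unfold Rdiv; apply Rmult_le_pos; [lra|left; apply Rinv_0_lt_compat; lra]).
    assert ((5 + L) * ln 2 / la <= 6 * ln 2 / la * L).
    { replace ((5 + L) * ln 2 / la) with ((5 + L) * (ln 2 / la)) by (field; lra).
      replace (6 * ln 2 / la * L) with ((6 * L) * (ln 2 / la)) by (field; lra).
      apply Rmult_le_compat_r; lra. }
    unfold A. lra. }
  assert (HRR : INR RR <= 513 * N * L) by (apply mx_le_real; auto; nra).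
  assert (HLL : INR LL <= A * L) by (apply mx_le_real; auto; nra).
  assert (HREPS : INR REPS <= 5 * N * L ^ 2) by (apply mx_le_real; auto; nra).
  assert (HPR : INR PR <= 1029 * N * L ^ 3) by (apply mx_le_real; auto; nra).
  assert (HT : INR T <= L + 2) by lra.
  assert (HKK : INR KK <= 4116 * N * L ^ 4).
  { unfold KK. rewrite mult_INR, S_INR.
    assert ((INR T + 1) * INR PR <= (4 * L) * (1029 * N * L ^ 3)).
    { apply Rmult_le_compat; try lra; auto using pos_INR. pose proof (pos_INR T); lra. }
    replace ((4 * L) * (1029 * N * L ^ 3)) with (4116 * N * L ^ 4) in H by (simpl; ring). lra. }
  assert (Hn2 : 0 < INR n) by lra.
  assert (HBR : INR BR <= 14 * L).
  { unfold BR, bst_cost. rewrite plus_INR. simpl (INR 1).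
    assert (H1 : INR (Nat.log2 RR) <= lg (513 * N * L)) by (apply log2_le_lg; nra).
    assert (513 * N * L <= 2 ^ 11 * INR n ^ 2).
    { assert (N * L <= INR n * (2 * INR n)) by (apply Rmult_le_compat; lra). simpl. nra. }
    pose proof (lg_bound (513 * N * L) 11 2 (INR n) ltac:(nra) Hn2 H) as H2.
    change (lg (INR n)) with L in H2. simpl INR in H2. lra. }
  assert (HBK : INR BK <= 23 * L).
  { unfold BK, bst_cost. rewrite plus_INR. simpl (INR 1).
    assert (HL4 : 1 <= L ^ 4) by (replace 1 with (1 ^ 4) by ring; apply pow_incr; lra).
    assert (H1 : INR (Nat.log2 KK) <= lg (4116 * N * L ^ 4)) by (apply log2_le_lg; nra).
    assert (4116 * N * L ^ 4 <= 2 ^ 17 * INR n ^ 5).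
    { assert (L ^ 4 <= (2 * INR n) ^ 4) by (apply pow_incr; lra).
      assert (N * L ^ 4 <= INR n * (2 * INR n) ^ 4) by (apply Rmult_le_compat; lra).
      replace (INR n * (2 * INR n) ^ 4) with (16 * INR n ^ 5) in H0 by (simpl; ring).
      assert (0 <= INR n ^ 5) by (apply pow_le; lra).
      replace (2 ^ 17) with 131072 by (simpl; ring). nra. }
    pose proof (lg_bound (4116 * N * L ^ 4) 17 5 (INR n) ltac:(nra) Hn2 H) as H2.
    change (lg (INR n)) with L in H2. simpl INR in H2. lra. }
  assert (HZ : INR Z <= (40 + 2 * A) * L).
  { unfold Z. rewrite !plus_INR, mult_INR. simpl (INR 3). simpl (INR 2). nra. }
  apply final_arith; auto using pos_INR; try lra.
  all: split; auto using pos_INR.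
Qed.
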